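(* Let $\Theta$ be a subset of a Polish space with metric $d$, and let $\{P^\theta:\theta\in\Theta\}$ be probability measures on $(\Omega,\mathcal{F})$ such that $\theta\mapsto P^\theta$ is continuous in total variation: for every $\theta\in\Theta$ and $\varepsilon>0$ there is $\delta>0$ with $\sup_{A\in\mathcal{F}}|P^\theta(A)-P^{\theta'}(A)|<\varepsilon$ whenever $d(\theta,\theta')<\delta$. Then there exists a probability measure $\mathbb{P}$ which is a countable convex combination of measures $P^\theta$, $\theta\in\Theta$, such that $P^\theta\ll\mathbb{P}$ for all $\theta\in\Theta$.
   Context: $(\Omega,\mathcal{F})$ is a measurable space. A countable convex combination means $\sum_k\lambda_kP^{\theta_k}$ with $\theta_k\in\Theta$, $\lambda_k\ge0$, $\sum_k\lambda_k=1$. *)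

(* Defs.v *)
From HB Require Import structures.
From mathcomp Require Import all_boot all_order all_algebra.
From mathcomp Require Import all_classical all_reals all_analysis.
Set Implicit Arguments. Unset Strict Implicit. Unset Printing Implicit Defensive.
Import Order.TTheory GRing.Theory Num.Theory.
Local Open Scope classical_set_scope.
Local Open Scope ring_scope.

Definition is_metric (R : realType) (X : Type) (d : X -> X -> R) : Prop :=
  (forall x y, 0 <= d x y) /\ (forall x y, d x y = 0 <-> x = y) /\
  (forall x y, d x y = d y x) /\ (forall x y z, d x z <= d x y + d y z).

Definition metric_complete (R : realType) (X : Type) (d : X -> X -> R) : Prop :=
  forall u : nat -> X,
    (forall e, 0 < e -> exists N, forall m n, (N <= m)%N -> (N <= n)%N -> d (u m) (u n) < e) ->
    exists x, forall e, 0 < e -> exists N, forall n, (N <= n)%N -> d (u n) x < e.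

Definition metric_separable (R : realType) (X : Type) (d : X -> X -> R) : Prop :=
  exists D : set X, countable D /\
    forall x e, 0 < e -> exists y, D y /\ d x y < e.

Definition polish_metric (R : realType) (X : Type) (d : X -> X -> R) : Prop :=
  [/\ is_metric d, metric_complete d & metric_separable d].

(* Main.v *)
From HB Require Import structures.
From mathcomp Require Import all_boot all_order all_algebra.
From mathcomp Require Import all_classical all_reals all_analysis.
Require Import Defs.
Import Order.TTheory GRing.Theory Num.Theory.
Local Open Scope classical_set_scope.
Local Open Scope ring_scope.

Section mix.
Context d (T : measurableType d) (R : realType) (mu : nat -> probability T R).

Definition wt (k : nat) : R := 1 / (2 ^ (k + 1))%:R.
Lemma wt_ge0 k : 0 <= wt k. Proof. by rewrite /wt divr_ge0. Qed.
Definition wtn k : {nonneg R} := NngNum (wt_ge0 k).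

Notation mixm := (mseries (fun k => mscale (wtn k) (mu k)) 0).

Lemma wt_sum : (\sum_(0 <= k <oo) (wt k)%:E = 1)%E.
Proof.
have := @cvg_geometric_eseries_half R 1 0.
rewrite expr0 divr1 => h.
by apply: cvg_lim => //; apply: h.
Qed.

Lemma mixmE A : mixm A = (\sum_(0 <= k <oo) (wt k)%:E * mu k A)%E.
Proof. by []. Qed.

Lemma mixm_setT : mixm setT = 1%E.
Proof.
rewrite mixmE; under eq_eseriesr do rewrite probability_setT mule1.
exact: wt_sum.
Qed.

HB.instance Definition _ := Measure_isProbability.Build _ _ _ mixm mixm_setT.
End mix.
Notation mixm mu := (mseries (fun k => mscale (wtn _ k) (mu k)) 0).
Definition choose_or {A : Type} (x0 : A) (Q : A -> Prop) : A :=
  match pselect (exists x, Q x) with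
  | left e => proj1_sig (cid e)
  | right _ => x0 end.

Lemma choose_orP {A : Type} (x0 : A) (Q : A -> Prop) :
  (exists x, Q x) -> Q (choose_or x0 Q).
Proof. by rewrite /choose_or; case: pselect => // e _; case: cid. Qed.

Lemma choose_orS {A : Type} (x0 : A) (Q S : A -> Prop) :
  (forall x, Q x -> S x) -> S x0 -> S (choose_or x0 Q).
Proof. by rewrite /choose_or => QS Sx0; case: pselect => // e; case: cid => x Qx; exact: QS. Qed.

Theorem lemma6p8 (R : realType) (X : Type) (dist : X -> X -> R)
  (dT : measure_display) (T : measurableType dT)
  (Theta : set X) (P : X -> probability T R) :
  polish_metric dist -> Theta !=set0 ->
  (forall th, Theta th -> forall eps : R, 0 < eps ->
     exists2 delta : R, 0 < delta &
       forall th', Theta th' -> dist th th' < delta ->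
         (ereal_sup [set `|P th A - P th' A|%E | A in [set A | measurable A]]
           < eps%:E)%E) ->
  exists (Pmix : probability T R) (th : nat -> X) (lam : nat -> R),
    [/\ (forall k, Theta (th k)),
        (forall k, 0 <= lam k),
        (\sum_(0 <= k <oo) (lam k)%:E = 1)%E,
        (forall A, measurable A ->
           Pmix A = \sum_(0 <= k <oo) ((lam k)%:E * P (th k) A))%E &
        (forall t, Theta t -> P t `<< Pmix)].
Proof.
move=> [[d0 [deq [dsym dtri]]] _ [D [cD dense]]] [t0 Ht0] cont.
have /countable_injP [h hinj] := cD.
pose g i := choose_or t0 (fun x => D x /\ h x = i).
pose th k := match (choice.unpickle k : option (nat * nat)) with
  | Some p => choose_or t0 (fun x => Theta x /\ dist (g p.1) x < p.2.+1%:R^-1)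
  | None => t0 end.
have Hth k : Theta (th k).
  rewrite /th; case: choice.unpickle => [p|//].
  by apply: choose_orS => // x [].
exists (mixm (fun k => P (th k))), th, (@wt R); split => //.
- exact: wt_ge0.
- exact: (@wt_sum R).
move=> t Ht N NN A mA AN.
have PA0 : mixm (fun k => P (th k)) A = 0%E by apply: NN.
have Pk0 k : P (th k) A = 0%E.
  have : ((wt R k)%:E * P (th k) A <= 0)%E.
    rewrite -PA0 mixmE.
    apply: le_trans (@nneseries_lim_ge R _ xpredT 0 k.+1 _); last first.
      by move=> n _ _; rewrite mule_ge0 // lee_fin wt_ge0.
    rewrite big_mkcond big_nat_recr //= leeDr //.
    by rewrite sume_ge0 // => n _; rewrite mule_ge0 // lee_fin wt_ge0.
  have wpos : (0 < wt R k) by rewrite /wt divr_gt0 // ltr0n expn_gt0.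
  move=> le0; apply/eqP; rewrite eq_le measure_ge0 andbT.
  by move: le0; rewrite pmule_rle0 // lte_fin.
apply/eqP; rewrite eq_le measure_ge0 andbT.
apply/lee_addgt0Pr => eps eps0; rewrite add0e.
have [delta delta0 Hd] := cont t Ht eps eps0.
have [n Hn] := ltr_add_invr (y := 0) (x := delta / 2) (ltac:(by rewrite divr_gt0)).
rewrite add0r in Hn.
have npos : 0 < n.+1%:R^-1 :> R by rewrite invr_gt0.
have [y [Dy dty]] := dense t _ npos.
have gy : g (h y) = y.
  have [Dg hg] : D (g (h y)) /\ h (g (h y)) = h y by apply: (choose_orP t0 (fun x => D x /\ h x = h y)); exists y.
  by apply: hinj; rewrite ?inE.
pose k := choice.pickle (h y, n).
have thk : th k = choose_or t0 (fun x => Theta x /\ dist y x < n.+1%:R^-1).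
  by rewrite /th /k choice.pickleK /= gy.
have [_ dyk] : Theta (th k) /\ dist y (th k) < n.+1%:R^-1.
  by rewrite thk; apply: (choose_orP t0 (fun x => Theta x /\ dist y x < n.+1%:R^-1)); exists t; rewrite dsym.
have dtk : dist t (th k) < delta.
  apply: le_lt_trans (dtri t y (th k)) _.
  rewrite [delta](splitr delta); apply: ltrD; exact: lt_trans Hn.
have := Hd _ (Hth k) dtk.
move/ltW; apply: le_trans.
apply: le_trans (ereal_sup_ubound _); last by exists A.
by rewrite Pk0 sube0 gee0_abs.
Qed.
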